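(* Let $T$ be a tree rooted at a vertex $v$ and let $\bar T$ be a pruning of $T$. Then $v\in\mathcal{A}(T)$ if and only if $v\in\mathcal{A}(\bar T)$, and $v\in\mathcal{N}(T)$ if and only if $v\in\mathcal{N}(\bar T)$.
   Context: All graphs are finite, simple and undirected. A dissociation set of a graph $G$ is a set $F\subseteq V(G)$ such that $G[F]$ has maximum degree at most $1$; a maximum dissociation set is one of maximum cardinality. $\mathcal{A}(G)$ is the set of vertices contained in every maximum dissociation set of $G$; $\mathcal{N}(G)$ is the set of vertices contained in no maximum dissociation set of $G$. In a rooted tree, for a vertex $u$, $C(u)$ is the set of children of $u$, $D[u]$ is the set consisting of $u$ and all its descendants, and $T_u$ is the subtree induced by $D[u]$. A branch vertex is a vertex of degree at least $3$. Pruning: let $T$ be rooted at $v$. While the current tree has a branch vertex different from $v$, choose such a branch vertex $u\ne v$ at maximum distance from $v$; then every proper descendant of $u$ has degree at most $2$, so for each child $w$ of $u$ the subtree $T_w$ is a path with end vertex $w$, and for $i\in\{0,1,2\}$ let $C^i(u)$ be the set of children $w$ of $u$ with $|V(T_w)|\equiv i \pmod 3$. If $|C^2(u)|\ge 1$ or $|C^1(u)|\ge 2$, delete all vertices of $D[u]$; if $|C^2(u)|=0$ and $|C^1(u)|\le 1$, delete all vertices of $D[w]$ for every $w\in C(u)\setminus\{z\}$, where $z$ is the unique vertex of $C^1(u)$ if $|C^1(u)|=1$ and an arbitrary child of $u$ otherwise. When no branch vertex other than $v$ remains, the resulting tree $\bar T$ is called a pruning of $T$. *)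

(* Defs.v *)
From mathcomp Require Import all_boot.
Set Implicit Arguments. Unset Strict Implicit. Unset Printing Implicit Defensive.

(* A finite simple graph is given by a vertex set S : {set T} inside a finite
   type T, with adjacency the restriction of a symmetric irreflexive relation
   e : rel T.  Deleting vertices = shrinking S (induced subgraph). *)
Section Graphs.
Variables (T : finType) (e : rel T).

Definition induced (S : {set T}) : rel T := fun x y => [&& x \in S, y \in S & e x y].
Definition nbrs (S : {set T}) (x : T) : {set T} := [set y in S | e x y].
Definition deg (S : {set T}) (x : T) : nat := #|nbrs S x|.

Definition connected_set (S : {set T}) : Prop :=
  forall x y, x \in S -> y \in S -> connect (induced S) x y.
Definition is_cycle (S : {set T}) (c : seq T) : bool :=
  [&& uniq c, 2 < size c, all (fun x => x \in S) c & cycle e c].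
Definition is_tree (S : {set T}) : Prop :=
  S != set0 /\ connected_set S /\ forall c, ~~ is_cycle S c.

Definition reach (S : {set T}) (x : T) (k : nat) : {set T} :=
  iter k (fun A => A :|: [set y in S | [exists z in A, e z y]]) ([set x] :&: S).
Definition dist (S : {set T}) (x y : T) : nat :=
  find (fun k => y \in reach S x k) (iota 0 #|T|).

Definition desc (S : {set T}) (v u : T) : {set T} :=
  [set w in S | dist S v w == dist S v u + dist S u w].
Definition children (S : {set T}) (v u : T) : {set T} :=
  [set w in nbrs S u | dist S v w == (dist S v u).+1].
Definition childmod (S : {set T}) (v u : T) (i : nat) : {set T} :=
  [set w in children S v u | #|desc S v w| %% 3 == i].

Definition prune_step (v : T) (S S' : {set T}) : Prop :=
  exists u, [/\ u \in S, u != v, 2 < deg S u,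
    (forall u', u' \in S -> u' != v -> 2 < deg S u' -> dist S v u' <= dist S v u) &
    (if (0 < #|childmod S v u 2|) || (1 < #|childmod S v u 1|)
     then S' = S :\: desc S v u
     else exists z, [/\ z \in children S v u,
                        (#|childmod S v u 1| == 1 -> z \in childmod S v u 1) &
                        S' = S :\: \bigcup_(w in children S v u | w != z) desc S v w])].

Inductive pruning (v : T) : {set T} -> {set T} -> Prop :=
| pruning_done (S : {set T}) : (forall u, u \in S -> u != v -> deg S u <= 2) -> pruning v S S
| pruning_step (S S' Sb : {set T}) : prune_step v S S' -> pruning v S' Sb -> pruning v S Sb.

Definition dissociation (S F : {set T}) : bool :=
  (F \subset S) && [forall x in F, #|[set y in F | e x y]| <= 1].
Definition max_dissociation (S F : {set T}) : Prop :=
  dissociation S F /\ forall F', dissociation S F' -> #|F'| <= #|F|.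
Definition in_A (S : {set T}) (x : T) : Prop :=
  forall F, max_dissociation S F -> x \in F.
Definition in_N (S : {set T}) (x : T) : Prop :=
  forall F, max_dissociation S F -> x \notin F.

End Graphs.

(* Main.v *)
Require Import Defs.
From mathcomp Require Import all_boot.
From mathcomp Require Import zify.
Set Implicit Arguments. Unset Strict Implicit. Unset Printing Implicit Defensive.



Section Reach.
Variables (T : finType) (e : rel T).
Hypothesis esym : symmetric e.
Hypothesis eirr : irreflexive e.

Lemma reachS (S : {set T}) x k y : (y \in reach e S x k.+1) =
  (y \in reach e S x k) || ((y \in S) && [exists z in reach e S x k, e z y]).
Proof. by rewrite /reach iterS -/(reach e S x k) in_setU inE. Qed.

Lemma reach0 (S : {set T}) x y : (y \in reach e S x 0) = (y == x) && (x \in S).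
Proof.
by rewrite /reach /= in_setI in_set1; case: eqP => // ->. Qed.

Lemma reach_sub (S : {set T}) x k : reach e S x k \subset S.
Proof.
elim: k => [|k IH]; apply/subsetP => y.
  by rewrite reach0 => /andP[/eqP-> ].
by rewrite reachS => /orP[/(subsetP IH)|/andP[]].
Qed.

Lemma reach_mono (S : {set T}) x k m : k <= m -> reach e S x k \subset reach e S x m.
Proof.
elim: m => [|m IH]; first by rewrite leqn0 => /eqP->.
rewrite leq_eqVlt => /orP[/eqP->//|]; rewrite ltnS => /IH H.
by apply/subsetP => y /(subsetP H) Hy; rewrite reachS Hy.
Qed.

Lemma dist_le (S : {set T}) x y k : y \in reach e S x k -> dist e S x y <= k.
Proof.
move=> Hy; rewrite /dist.
case: (ltnP k #|T|) => Hk.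
  rewrite leqNgt; apply/negP => /(before_find 0).
  by rewrite nth_iota // add0n Hy.
by apply: leq_trans (find_size _ _) _; rewrite size_iota.
Qed.

Lemma dist_reach (S : {set T}) x y k : y \in reach e S x k -> k < #|T| ->
  y \in reach e S x (dist e S x y) /\ dist e S x y < #|T|.
Proof.
move=> Hy Hk.
have Hh : has (fun k => y \in reach e S x k) (iota 0 #|T|).
  by apply/hasP; exists k => //; rewrite mem_iota.
have Hf := Hh; rewrite has_find size_iota in Hf.
split => //.
by have := nth_find 0 Hh; rewrite nth_iota // add0n.
Qed.

Lemma path_induced_all (A : {set T}) a p : path (induced e A) a p -> all (fun x => x \in A) p.
Proof.
elim: p a => [|b p IH] a //= /andP[/and3P[_ Hb _] /IH ->]; by rewrite Hb.
Qed.

Lemma walk_reach (S : {set T}) x p : x \in S -> path (induced e S) x p ->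
  last x p \in reach e S x (size p).
Proof.
move=> xS; elim/last_ind: p => [|p z IH]; first by rewrite /= reach0 eqxx xS.
rewrite rcons_path last_rcons size_rcons => /andP[/IH H /and3P[_ zS ez]].
rewrite reachS zS; apply/orP; right; apply/existsP; exists (last x p).
by rewrite H.
Qed.

Lemma reach_trans (S : {set T}) x y z a b : y \in reach e S x a -> z \in reach e S y b ->
  z \in reach e S x (a + b).
Proof.
move=> Hy; elim: b z => [|b IH] z.
  by rewrite reach0 addn0 => /andP[/eqP-> _].
rewrite reachS addnS => /orP[/IH H|/andP[zS /existsP[w /andP[/IH Hw ew]]]].
  by apply: (subsetP (reach_mono S x (leqnSn _))).
by rewrite reachS zS; apply/orP; right; apply/existsP; exists w; rewrite Hw.
Qed.

Section Conn.
Variable S : {set T}.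
Hypothesis conn : connected_set e S.

Lemma conn_reach x y : x \in S -> y \in S ->
  y \in reach e S x (dist e S x y) /\ dist e S x y < #|T|.
Proof.
move=> xS yS; have /connectP[p Hp ->] := conn xS yS.
case: (shortenP Hp) => p' Hp' Up' _.
apply: (dist_reach (walk_reach xS Hp')).
have := card_uniqP Up'; rewrite /= => Hc.
by have := max_card (mem (x :: p')); rewrite Hc.
Qed.

Lemma dist_tri x y z : x \in S -> y \in S -> z \in S ->
  dist e S x z <= dist e S x y + dist e S y z.
Proof.
move=> xS yS zS; apply: dist_le.
exact: (reach_trans (conn_reach xS yS).1 (conn_reach yS zS).1).
Qed.

Lemma dist_adj x y z : x \in S -> y \in S -> z \in S -> e y z ->
  dist e S x z <= (dist e S x y).+1.
Proof.
move=> xS yS zS eyz; apply: dist_le; rewrite reachS zS; apply/orP; right.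
by apply/existsP; exists y; rewrite eyz (conn_reach xS yS).1.
Qed.

Lemma dist_xx x : x \in S -> dist e S x x = 0.
Proof. by move=> xS; apply/eqP; rewrite -leqn0; apply: dist_le; rewrite reach0 eqxx xS. Qed.

Lemma dist0 x y : x \in S -> y \in S -> dist e S x y = 0 -> y = x.
Proof.
move=> xS yS H; have := (conn_reach xS yS).1; rewrite H reach0.
by case/andP => /eqP.
Qed.

Lemma dist_par x y : x \in S -> y \in S -> y != x ->
  exists2 z, z \in S & e z y /\ (dist e S x z).+1 = dist e S x y.
Proof.
move=> xS yS yx.
case Hk: (dist e S x y) => [|k].
  by move: (dist0 xS yS Hk) yx => ->; rewrite eqxx.
have := (conn_reach xS yS).1; rewrite Hk reachS => /orP[/dist_le|].
  by rewrite Hk ltnn.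
case/andP => _ /existsP[z /andP[Hz ezy]].
have zS : z \in S by apply: (subsetP (reach_sub S x k)).
exists z => //; split => //.
have H1 := dist_le Hz; have H2 := dist_adj xS zS yS ezy.
lia.
Qed.

End Conn.
End Reach.



Ltac slia := repeat match goal with
  | H : is_true (leq _ _) |- _ => revert H
  | H : @eq ?t _ _ |- _ => unify t nat; revert H
  end; clear; intros; lia.

Inductive hp (T : finType) (e : rel T) : {set T} -> T -> Prop :=
| hp1 w : hp e [set w] w
| hpS X w c : hp e X c -> w \notin X -> e w c ->
    (forall y, y \in X -> e w y -> y = c) -> hp e (w |: X) w.




Section Diss.
Variables (T : finType) (e : rel T).
Hypothesis esym : symmetric e.
Hypothesis eirr : irreflexive e.

Definition diss (S : {set T}) := \max_(F : {set T} | dissociation e S F) #|F|.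
Definition preserve (S S' : {set T}) x :=
  (in_A e S x <-> in_A e S' x) /\ (in_N e S x <-> in_N e S' x).

Lemma diss0 (S : {set T}) : dissociation e S set0.
Proof. by rewrite /dissociation sub0set; apply/forall_inP => x; rewrite inE. Qed.

Lemma diss_ge (S F : {set T}) : dissociation e S F -> #|F| <= diss S.
Proof. by move=> H; apply: (leq_bigmax_cond F H). Qed.

Lemma diss_ex (S : {set T}) : exists F, dissociation e S F /\ #|F| = diss S.
Proof.
have [|F HF HE] := @eq_bigmax_cond _ (fun F : {set T} => dissociation e S F) (fun F => #|F|).
  by apply/card_gt0P; exists set0; rewrite /in_mem /= diss0.
by exists F; split => //; rewrite /diss HE.
Qed.

Lemma maxdP (S F : {set T}) : dissociation e S F -> diss S <= #|F| -> max_dissociation e S F.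
Proof. by move=> H1 H2; split => // F' /diss_ge H; apply: leq_trans H H2. Qed.

Lemma maxd_card (S F : {set T}) : max_dissociation e S F -> #|F| = diss S.
Proof.
case=> H1 H2; apply/eqP; rewrite eqn_leq diss_ge //.
by have [F' [H3 <-]] := diss_ex S; apply: H2.
Qed.

Lemma max_ex (S : {set T}) : exists F, max_dissociation e S F.
Proof. by have [F [H1 H2]] := diss_ex S; exists F; apply: maxdP; rewrite ?H2. Qed.

Lemma diss_sub (S S' F F' : {set T}) : dissociation e S F -> F' \subset F -> F' \subset S' ->
  dissociation e S' F'.
Proof.
rewrite /dissociation => /andP[_ /forall_inP H] sub sub'; rewrite sub'.
apply/forall_inP => x xF'; apply: leq_trans (H x (subsetP sub x xF')).
apply: subset_leq_card; apply/subsetP => y; rewrite !inE => /andP[yF' ->].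
by rewrite (subsetP sub _ yF').
Qed.

Lemma diss_subS (S F : {set T}) : dissociation e S F -> F \subset S.
Proof. by case/andP. Qed.

Lemma diss_nb (S F : {set T}) x : dissociation e S F -> x \in F -> #|[set y in F | e x y]| <= 1.
Proof. by case/andP => _ /forall_inP H; apply: H. Qed.

Lemma two_nb (S F : {set T}) x y z : dissociation e S F -> x \in F -> y \in F -> z \in F ->
  y != z -> e x y -> e x z -> False.
Proof.
move=> dF xF yF zF yz exy exz; have := diss_nb dF xF.
suff : 1 < #|[set y0 in F | e x y0]| by case: ltngtP.
by apply/card_gt1P; exists y, z; rewrite !inE yF zF exy exz.
Qed.

Lemma remove1 (S D : {set T}) x : D \subset S ->
  (exists F0, max_dissociation e D F0 /\ forall a y, a \in F0 -> y \in S :\: D -> ~~ e a y) ->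
  x \notin D -> preserve S (S :\: D) x.
Proof.
move=> DS [F0 [[dF0 mF0] Hb]] xD.
have F0D := diss_subS dF0.
have K1 : forall F1, dissociation e (S :\: D) F1 -> dissociation e S (F1 :|: F0).
  move=> F1 dF1; have F1S := diss_subS dF1.
  rewrite /dissociation; apply/andP; split.
    rewrite subUset (subset_trans F0D DS) andbT.
    by apply: subset_trans F1S _; apply/subsetP => y; rewrite inE => /andP[].
  apply/forall_inP => y; rewrite in_setU => /orP[yF1|yF0].
    apply: leq_trans (diss_nb dF1 yF1); apply: subset_leq_card; apply/subsetP => z.
    rewrite !inE => /andP[/orP[->//|zF0] eyz]; exfalso.
    by move: (Hb z y zF0 (subsetP F1S y yF1)); rewrite esym eyz.
  apply: leq_trans (diss_nb dF0 yF0); apply: subset_leq_card; apply/subsetP => z.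
  rewrite !inE => /andP[/orP[zF1|->//] eyz]; exfalso.
  by move: (Hb y z yF0 (subsetP F1S z zF1)); rewrite eyz.
have Kc : forall F1 : {set T}, F1 \subset S :\: D -> #|F1 :|: F0| = #|F1| + #|F0|.
  move=> F1 F1S; rewrite -cardsUI.
  suff -> : F1 :&: F0 = set0 by rewrite cards0 addn0.
  apply/setP => y; rewrite !inE; apply/negP => /andP[/(subsetP F1S)].
  by rewrite inE => /andP[/negP yD _] /(subsetP F0D).
have K2 : forall F, dissociation e S F -> #|F| <= diss (S :\: D) + #|F0|.
  move=> F dF; rewrite -(cardsID D F) addnC; apply: leq_add.
    apply: diss_ge; apply: (diss_sub dF); first exact: subsetDl.
    by apply: setSD; exact: diss_subS dF.
  by apply: mF0; apply: (diss_sub dF); [exact: subsetIl|exact: subsetIr].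
have M1 : forall F1, max_dissociation e (S :\: D) F1 -> max_dissociation e S (F1 :|: F0).
  move=> F1 mF1; have := maxd_card mF1; case: mF1 => dF1 _ HF1.
  split; first exact: K1.
  by move=> F' /K2; rewrite Kc ?HF1 //; exact: diss_subS dF1.
have M2 : forall F, max_dissociation e S F -> max_dissociation e (S :\: D) (F :\: D).
  move=> F [dF mF]; apply: maxdP.
    apply: (diss_sub dF); first exact: subsetDl.
    by apply: setSD; exact: diss_subS dF.
  have [F1 [dF1 HF1]] := diss_ex (S :\: D).
  have H1 := mF _ (K1 _ dF1); rewrite Kc ?HF1 in H1; last exact: diss_subS dF1.
  have H2 : #|F :&: D| <= #|F0|.
    by apply: mF0; apply: (diss_sub dF); [exact: subsetIl|exact: subsetIr].
  have H3 := cardsID D F; slia.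
split; split.
- move=> HA F1 /M1 /HA; rewrite in_setU => /orP[//|/(subsetP F0D) xD'].
  by rewrite xD' in xD.
- by move=> HA F /M2 /HA; rewrite in_setD => /andP[_ ->].
- by move=> HN F1 /M1 /HN; rewrite in_setU negb_or => /andP[].
- by move=> HN F /M2 /HN; rewrite in_setD xD.
Qed.

Lemma preserve_trans (S1 S2 S3 : {set T}) x : preserve S1 S2 x -> preserve S2 S3 x -> preserve S1 S3 x.
Proof. by move=> [H1 H2] [H3 H4]; split; [rewrite H1 H3|rewrite H2 H4]. Qed.

Lemma remove_many (S W : {set T}) (Df : T -> {set T}) x :
  (forall w, w \in W -> Df w \subset S) ->
  (forall w1 w2, w1 \in W -> w2 \in W -> w1 != w2 -> [disjoint Df w1 & Df w2]) ->
  (forall w, w \in W -> exists F0, max_dissociation e (Df w) F0 /\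
      forall a y, a \in F0 -> y \in S :\: Df w -> ~~ e a y) ->
  (forall w, w \in W -> x \notin Df w) ->
  preserve S (S :\: \bigcup_(w in W) Df w) x.
Proof.
move: {2}#|W| (leqnn #|W|) => n; elim: n W => [|n IH] W Hn H1 H2 H3 H4.
  move: Hn; rewrite leqn0 cards_eq0 => /eqP ->; rewrite big_set0 setD0.
  by split; split.
case: (set_0Vmem W) => [->|[w wW]].
  by rewrite big_set0 setD0; split; split.
rewrite (big_setD1 w wW) /=.
set B := \bigcup_(i in W :\ w) Df i.
have -> : S :\: (Df w :|: B) = (S :\: B) :\: Df w.
  by apply/setP => y; rewrite !inE negb_or; case: (y \in Df w); case: (y \in B); case: (y \in S).
have sub1 : forall w', w' \in W :\ w -> w' \in W by move=> w'; rewrite in_setD1 => /andP[].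
apply: preserve_trans.
  apply: (IH (W :\ w)).
  - by move: Hn; rewrite (cardsD1 w W) wW /=; slia.
  - by move=> w' /sub1; apply: H1.
  - by move=> w1 w2 /sub1 ? /sub1; apply: H2.
  - by move=> w' /sub1; apply: H3.
  - by move=> w' /sub1; apply: H4.
apply: remove1; last exact: H4.
- apply/subsetP => y yD; rewrite inE (subsetP (H1 w wW) y yD) andbT.
  apply/bigcupP => -[w' w'W yD'].
  move: w'W; rewrite in_setD1 => /andP[w'w w'W].
  have ww' : w != w' by rewrite eq_sym.
  by rewrite (disjointFr (H2 w w' wW w'W ww') yD) in yD'.
- have [F0 [mF0 Hb]] := H3 w wW; exists F0; split => // a y aF0.
  by rewrite !inE => /andP[yD /andP[_ yS]]; apply: Hb; rewrite // inE yD yS.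
Qed.

Definition f n := n - n %/ 3.

Lemma hp_in (X : {set T}) w : hp e X w -> w \in X.
Proof. by case => [w'|X' w' c _ _ _ _]; rewrite !inE eqxx. Qed.

Lemma hpU (X : {set T}) w : hp e X w -> forall G, dissociation e X G ->
  [/\ #|G| <= f #|X|, (w \notin G -> #|G| <= f (#|X|.-1)) &
      (w \in G -> (forall y, y \in G -> ~~ e w y) -> #|G| <= (f (#|X| - 2)).+1)].
Proof.
elim => [w0|X0 w0 c HX IH wX ewc Hn] G dG; have GS := diss_subS dG.
  have H1 : #|G| <= 1 by rewrite -(cards1 w0); apply: subset_leq_card.
  rewrite cards1 /f /=; split => // wG.
  suff -> : G = set0 by rewrite cards0.
  apply/setP => y; rewrite inE; apply/negP => yG.
  by move: (subsetP GS y yG); rewrite inE => /eqP yw; rewrite -yw yG in wG.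
have cX := hp_in HX.
have Hm : 0 < #|X0| by apply/card_gt0P; exists c.
rewrite cardsU1 wX /= add1n /=.
have dG' : dissociation e X0 (G :\ w0).
  apply: (diss_sub dG); first exact: subsetDl.
  apply/subsetP => y; rewrite in_setD1 => /andP[yw /(subsetP GS)].
  by rewrite in_setU1 (negbTE yw).
have [U1 U2 U3] := IH _ dG'.
have HG := cardsD1 w0 G.
case: (boolP (w0 \in G)) => wG; last first.
  rewrite (negbTE wG) /= in HG.
  split; [move: U1 HG; rewrite /f; slia|move=> _; move: U1 HG; rewrite /f; slia|].
  by [].
rewrite wG /= in HG.
have cw : c != w0 by apply/eqP => cw; rewrite -cw cX in wX.
case: (boolP (c \in G)) => cG.
  have cG' : c \in G :\ w0 by rewrite in_setD1 cw.
  have iso : forall y, y \in G :\ w0 -> ~~ e c y.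
    move=> y; rewrite in_setD1 => /andP[yw yG]; apply/negP => ecy.
    by apply: (two_nb dG cG wG yG); rewrite 1?eq_sym // esym.
  have := U3 cG' iso; move: HG Hm; rewrite /f => HG Hm H.
  split; [slia| by [] |].
  by move=> _ /(_ c cG); rewrite ewc.
have cG' : c \notin G :\ w0 by rewrite in_setD1 (negbTE cG) andbF.
have := U2 cG'; move: HG Hm; rewrite /f => HG Hm H.
split; [slia| by [] |move=> _ _; slia].
Qed.


Lemma diss_add (X G : {set T}) w c : dissociation e X G -> w \notin X ->
  (forall y, y \in X -> e w y -> y = c) -> (c \in G -> forall y, y \in G -> ~~ e c y) ->
  dissociation e (w |: X) (w |: G).
Proof.
move=> dG wX Hc Hiso; have GX := diss_subS dG.
rewrite /dissociation setUS //=; apply/forall_inP => x; rewrite in_setU1 => /orP[/eqP->|xG].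
  rewrite -(cards1 c); apply: subset_leq_card; apply/subsetP => y.
  rewrite !inE => /andP[/orP[/eqP->|yG] ewy]; first by rewrite eirr in ewy.
  by rewrite (Hc y (subsetP GX y yG) ewy).
case: (eqVneq x c) => [xc|xc].
  subst x; rewrite -(cards1 w); apply: subset_leq_card; apply/subsetP => y.
  rewrite !inE => /andP[/orP[//|yG] ecy].
  by move: (Hiso xG y yG); rewrite ecy.
apply: leq_trans (diss_nb dG xG); apply: subset_leq_card; apply/subsetP => y.
rewrite !inE => /andP[/orP[/eqP yw|->//] exy]; subst y.
by move: xc; rewrite (Hc x (subsetP GX x xG)) ?eqxx // esym.
Qed.

Lemma hpL (X : {set T}) w : hp e X w -> exists G, [/\ dissociation e X G, #|G| = f #|X|,
  (#|X| %% 3 = 0 -> w \notin G),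
  (#|X| %% 3 = 1 -> w \in G /\ forall y, y \in G -> ~~ e w y) &
  (#|X| %% 3 = 2 -> w \in G)].
Proof.
elim => [w0|X0 w0 c HX [G [dG HG H0 H1 H2]] wX ewc Hn].
  exists [set w0]; rewrite cards1; split => //.
  - rewrite /dissociation subxx /=; apply/forall_inP => x; rewrite inE => /eqP->.
    rewrite leq_eqVlt; apply/orP; right; rewrite ltnS leqn0 cards_eq0; apply/eqP/setP => y.
    by rewrite !inE; case: eqP => // ->; rewrite eirr.
  - by move=> _; split; rewrite ?inE ?eqxx // => y; rewrite inE => /eqP->; rewrite eirr.
have GX := diss_subS dG.
have wG : w0 \notin G by apply/negP => /(subsetP GX); rewrite (negbTE wX).
rewrite cardsU1 wX /= add1n.
have Hr : #|X0| %% 3 = 0 \/ #|X0| %% 3 = 1 \/ #|X0| %% 3 = 2 by slia.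
case: Hr => [Hr|[Hr|Hr]].
- have cG : c \notin G by apply: H0.
  exists (w0 |: G); split.
  + by apply: (diss_add dG wX Hn) => cG'; rewrite cG' in cG.
  + rewrite cardsU1 wG /= add1n HG; move: Hr; rewrite /f; slia.
  + slia.
  + move=> _; rewrite in_setU1 eqxx; split => // y; rewrite in_setU1 => /orP[/eqP->|yG].
      by rewrite eirr.
    apply/negP => ewy; move: (Hn y (subsetP GX y yG) ewy) => yc.
    by rewrite -yc yG in cG.
  + slia.
- have [cG iso] := H1 Hr.
  exists (w0 |: G); split.
  + exact: (diss_add dG wX Hn).
  + rewrite cardsU1 wG /= add1n HG; move: Hr; rewrite /f; slia.
  + slia.
  + slia.
  + by move=> _; rewrite in_setU1 eqxx.
- exists G; split.
  + apply: (diss_sub dG) => //; apply: subset_trans GX _; exact: subsetU1.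
  + rewrite HG; move: Hr; rewrite /f; slia.
  + by move=> _.
  + slia.
  + slia.
Qed.

Lemma hp_main (X : {set T}) w : hp e X w ->
  [/\ diss X = f #|X|,
     (#|X| %% 3 = 0 -> exists G, max_dissociation e X G /\ w \notin G),
     (#|X| %% 3 != 0 -> forall G, dissociation e X G -> w \notin G -> #|G| < diss X) &
     (#|X| %% 3 = 2 -> forall G, dissociation e X G -> w \in G ->
         (forall y, y \in G -> ~~ e w y) -> #|G| < diss X)].
Proof.
move=> H; have [G [dG HG H0 _ _]] := hpL H.
have Hd : diss X = f #|X|.
  have [F [dF HF]] := diss_ex X; have [U1 _ _] := hpU H dF.
  apply/eqP; rewrite eqn_leq; apply/andP; split; first by rewrite -HF.
  by rewrite -HG; exact: diss_ge.
have Hm : 0 < #|X| by apply/card_gt0P; exists w; exact: hp_in H.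
split => //.
- move=> Hr; exists G; split; last exact: H0.
  by apply: maxdP => //; rewrite Hd HG.
- move=> Hr G' dG' wG'; have [_ U2 _] := hpU H dG'; have := U2 wG'.
  have Hr' : #|X| %% 3 <> 0 by apply/eqP.
  rewrite Hd /f; move: Hr' Hm; clear; intros; lia.
- move=> Hr G' dG' wG' iso; have [_ _ U3] := hpU H dG'; have := U3 wG' iso.
  rewrite Hd /f; move: Hr Hm; slia.
Qed.

End Diss.



Section Tree.
Variables (T : finType) (e : rel T).
Hypothesis esym : symmetric e.
Hypothesis eirr : irreflexive e.
Variables (S : {set T}) (v : T).
Hypothesis tree : is_tree e S.
Hypothesis vS : v \in S.

Let conn : connected_set e S. Proof. by case: tree => _ []. Qed.
Local Notation d := (dist e S v).

Lemma induced_sym (A : {set T}) : symmetric (induced e A).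
Proof. by move=> x y; rewrite /induced esym andbCA. Qed.

Lemma no_two_paths y a b : y \in S -> a \in S -> b \in S -> a != b ->
  e y a -> e y b -> connect (induced e (S :\ y)) a b -> False.
Proof.
move=> yS aS bS ab eya eyb /connectP[p Hp Hb].
case: (shortenP Hp) Hb => p' Hp' Up' _ Hb.
case: tree => _ [_ /(_ (y :: a :: p'))]; apply/negP/negPn.
have ay : a != y by apply/eqP => ay; move: eya; rewrite ay eirr.
have Hall := path_induced_all Hp'.
have p'S : forall x, x \in p' -> x \in S :\ y by move=> x; apply: (allP Hall).
rewrite /is_cycle.
have pn : p' != [::] by case: p' {Hp' Up' Hall p'S} Hb => //= Hb; rewrite -Hb eqxx in ab.
apply/and4P; split.
- rewrite cons_uniq Up' andbT inE negb_or eq_sym ay /=; apply/negP => /p'S.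
  by rewrite !inE eqxx.
- by case: p' pn {Hp' Up' Hall p'S Hb}.
- rewrite /= yS aS /=; apply/allP => x /p'S; rewrite inE; by case/andP.
- rewrite /= rcons_path eya /= -Hb esym eyb andbT.
  apply: sub_path Hp' => x z; by case/and3P.
Qed.

Lemma d_v : d v = 0. Proof. exact: dist_xx. Qed.

Lemma d0 x : x \in S -> d x = 0 -> x = v.
Proof. by move=> xS; apply: dist0. Qed.

Lemma chain_conn y a : y \in S -> a \in S -> a != y -> d a <= d y ->
  connect (induced e (S :\ y)) a v.
Proof.
move=> yS; move: {2}(d a) (leqnn (d a)) => n; elim: n a => [|n IH] a Hn aS ay Hay.
  by rewrite (d0 aS _) ?connect0 //; slia.
case: (eqVneq a v) => [->|av]; first exact: connect0.
have [z zS [eza Hz]] := dist_par conn vS aS av.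
have zy : z != y by apply/eqP => zy; move: Hz Hay; rewrite zy; slia.
apply: connect_trans (IH z _ zS zy _); first apply: connect1.
- by rewrite /induced !inE ay zy aS zS esym.
- slia.
- slia.
Qed.

Lemma uniq_par y a b : y \in S -> a \in S -> b \in S -> e y a -> e y b ->
  d a <= d y -> d b <= d y -> a = b.
Proof.
move=> yS aS bS eya eyb Ha Hb; apply/eqP/negPn/negP => ab.
have ay : a != y by apply/eqP => ay; move: eya; rewrite ay eirr.
have by' : b != y by apply/eqP => by'; move: eyb; rewrite by' eirr.
apply: (no_two_paths yS aS bS ab eya eyb).
apply: connect_trans (chain_conn yS aS ay Ha) _.
rewrite (sym_connect_sym (induced_sym _)).
exact: chain_conn.
Qed.

Lemma adj_d x y : x \in S -> y \in S -> e x y -> d x <= d y -> d y = (d x).+1.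
Proof.
move=> xS yS exy Hxy.
have H1 := dist_adj conn vS xS yS exy.
case: (ltngtP (d x) (d y)) Hxy => // Heq _; first slia.
have yv : y != v by apply/eqP => yv; move: Heq; rewrite yv d_v => /(d0 xS) xv;
  move: exy; rewrite xv yv eirr.
have [p pS [epy Hp]] := dist_par conn vS yS yv.
have xp : x = p.
  apply: (uniq_par yS xS pS); rewrite 1?esym //; slia.
subst p; slia.
Qed.

Local Notation D := (desc e S v).

Lemma inD u x : (x \in D u) = (x \in S) && (d x == d u + dist e S u x).
Proof. by rewrite inE. Qed.

Lemma D_sub u : D u \subset S.
Proof. by apply/subsetP => x; rewrite inD => /andP[]. Qed.

Lemma D_self u : u \in S -> u \in D u.
Proof. move=> uS; rewrite inD uS. by rewrite (dist_xx e uS) addn0 eqxx. Qed.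

Lemma v_notin_D u : u \in S -> u != v -> v \notin D u.
Proof.
move=> uS uv; rewrite inD d_v; apply/negP => /andP[_ /eqP H].
have uv0 : u = v by apply: (d0 uS); slia.
by rewrite uv0 eqxx in uv.
Qed.

Lemma D_d u x : u \in S -> x \in D u -> d u <= d x /\ (x != u -> d u < d x).
Proof.
move=> uS; rewrite inD => /andP[xS /eqP H]; split; first slia.
move=> xu; have : dist e S u x != 0.
  by apply/eqP => /(dist0 conn uS xS) xu'; rewrite xu' eqxx in xu.
slia.
Qed.

Lemma D_par u x p : u \in S -> x \in S -> x != u -> p \in S -> e p x ->
  (d p).+1 = d x -> (x \in D u) = (p \in D u).
Proof.
move=> uS xS xu pS epx Hp; rewrite !inD xS pS /=.
apply/idP/idP => /eqP H; apply/eqP.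
- have [q qS [eqx Hq]] := dist_par conn uS xS xu.
  have Ht := dist_tri conn vS uS qS.
  have qp : q = p.
    apply: (uniq_par xS qS pS); rewrite 1?esym //; slia.
  subst q; slia.
- have H1 := dist_adj conn uS pS xS epx.
  have H2 := dist_tri conn vS uS xS.
  slia.
Qed.

Lemma D_boundary u x y : u \in S -> x \in D u -> y \in S -> y \notin D u -> e x y ->
  x = u /\ (d y).+1 = d u.
Proof.
move=> uS xD yS yD exy.
have xS : x \in S by move: xD; rewrite inD => /andP[].
case: (leqP (d x) (d y)) => Hxy.
  have Hy := adj_d xS yS exy Hxy.
  have yu : y != u by apply/eqP => yu; rewrite yu D_self in yD.
  by rewrite (D_par uS yS yu xS exy (sym_eq Hy)) xD in yD.
have eyx : e y x by rewrite esym.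
have Hx := adj_d yS xS eyx (ltnW Hxy).
case: (eqVneq x u) => [xu|xu]; first by split => //; rewrite -xu.
by rewrite -(D_par uS xS xu yS eyx (sym_eq Hx)) xD in yD.
Qed.

Lemma inchildren u w : (w \in children e S v u) = [&& w \in S, e u w & d w == (d u).+1].
Proof. by rewrite !inE andbA. Qed.

Lemma child_prop u w : w \in children e S v u -> [/\ w \in S, e u w & d w = (d u).+1].
Proof. by rewrite inchildren => /and3P[? ? /eqP]. Qed.

Lemma D_child_sub u w : u \in S -> w \in children e S v u -> D w \subset D u.
Proof.
move=> uS /child_prop[wS euw Hw]; apply/subsetP => x; rewrite !inD => /andP[xS /eqP Hx].
rewrite xS /=; have H1 := dist_tri conn vS uS xS; have H2 := dist_tri conn uS wS xS.
have H3 := dist_adj conn uS uS wS euw; rewrite (dist_xx e) // in H3.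
apply/eqP; slia.
Qed.

Lemma D_split u x : u \in S -> x \in D u -> x != u ->
  exists2 w, w \in children e S v u & x \in D w.
Proof.
move=> uS; move: {2}(d x) (leqnn (d x)) => n; elim: n x => [|n IH] x Hn xD xu.
  by have [_ /(_ xu)] := D_d uS xD; slia.
have xS : x \in S by move: xD; rewrite inD => /andP[].
have xv : x != v.
  by apply/eqP => xv; have [_ /(_ xu)] := D_d uS xD; rewrite xv d_v.
have [p pS [epx Hp]] := dist_par conn vS xS xv.
have pD : p \in D u by rewrite -(D_par uS xS xu pS epx Hp).
case: (eqVneq p u) => [pu|pu].
  exists x; last exact: D_self.
  by rewrite inchildren xS -pu epx -Hp eqxx.
have [|w wc pw] := IH p _ pD pu; first slia.
exists w => //; have [wS _ _] := child_prop wc.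
case: (eqVneq x w) => [->|xw]; first exact: D_self.
by rewrite (D_par wS xS xw pS epx Hp).
Qed.

Lemma D_disj u w1 w2 x : u \in S -> w1 \in children e S v u -> w2 \in children e S v u ->
  w1 != w2 -> x \in D w1 -> x \notin D w2.
Proof.
move=> uS c1 c2 w12; move: {2}(d x) (leqnn (d x)) => n.
elim: n x => [|n IH] x Hn x1; apply/negP => x2.
  have [w1S _ Hw1] := child_prop c1; have [Hd _] := D_d w1S x1. rewrite Hw1 in Hd. by move: (leq_trans Hd Hn).
have [w1S euw1 Hw1] := child_prop c1; have [w2S euw2 Hw2] := child_prop c2.
have xS : x \in S by move: x1; rewrite inD => /andP[].
case: (eqVneq x w1) => [xw1|xw1].
  subst x; have xw2 : w1 != w2 by [].
  rewrite (D_par w2S w1S xw2 uS euw1 (sym_eq Hw1)) in x2.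
  have [H _] := D_d w2S x2; rewrite Hw2 in H; by rewrite ltnn in H.
case: (eqVneq x w2) => [xw2|xw2].
  subst x.
  rewrite (D_par w1S w2S xw1 uS euw2 (sym_eq Hw2)) in x1.
  have [H _] := D_d w1S x1; rewrite Hw1 in H; by rewrite ltnn in H.
have xv : x != v.
  by apply/eqP => xv; have [H _] := D_d w1S x1; rewrite xv d_v Hw1 in H.
have [p pS [epx Hp]] := dist_par conn vS xS xv.
rewrite (D_par w1S xS xw1 pS epx Hp) in x1.
rewrite (D_par w2S xS xw2 pS epx Hp) in x2.
by have := IH p (ltac:(slia)) x1; rewrite x2.
Qed.

Lemma D_child_boundary u w x y : u \in S -> w \in children e S v u -> x \in D w ->
  y \in S -> y \notin D w -> e x y -> x = w /\ y = u.
Proof.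
move=> uS wc xD yS yD exy; have [wS euw Hw] := child_prop wc.
have [xw Hy] := D_boundary wS xD yS yD exy; subst x; split => //.
apply: (uniq_par wS yS uS exy); rewrite 1?esym //; slia.
Qed.

Lemma children_deg x : x \in S -> x != v -> #|children e S v x| < deg e S x.
Proof.
move=> xS xv; have [p pS [epx Hp]] := dist_par conn vS xS xv.
apply: proper_card; apply/properP; split.
  by apply/subsetP => w; rewrite inE => /andP[].
exists p; first by rewrite inE pS esym.
by rewrite inchildren; apply/negP => /and3P[_ _ /eqP]; slia.
Qed.

Lemma tree_remove (X : {set T}) : v \notin X ->
  (forall x p, x \in S -> x != v -> p \in S -> e p x -> (d p).+1 = d x -> p \in X -> x \in X) ->
  is_tree e (S :\: X).
Proof.
move=> vX Hcl.
have vS' : v \in S :\: X by rewrite inE vX vS.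
have Hc : forall x, x \in S :\: X -> connect (induced e (S :\: X)) x v.
  move=> x; move: {2}(d x) (leqnn (d x)) => n; elim: n x => [|n IH] x Hn.
    by rewrite inE => /andP[_ xS]; rewrite (d0 xS) ?connect0 //; slia.
  move=> xS'; have xS : x \in S by move: xS'; rewrite inE => /andP[].
  case: (eqVneq x v) => [->|xv]; first exact: connect0.
  have [p pS [epx Hp]] := dist_par conn vS xS xv.
  have pS' : p \in S :\: X.
    rewrite inE pS andbT; apply/negP => /(Hcl _ _ xS xv pS epx Hp) xX.
    by move: xS'; rewrite inE xX.
  apply: connect_trans (IH p _ pS') ; last slia.
  by apply: connect1; rewrite /induced xS' pS' esym.
split; first by apply/set0Pn; exists v.
split.
  move=> x y xS yS; apply: connect_trans (Hc x xS) _.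
  by rewrite (sym_connect_sym (induced_sym _)); apply: Hc.
move=> c; case: tree => _ [_ /(_ c)]; apply: contra.
rewrite /is_cycle => /and4P[-> -> Ha ->]; rewrite andbT /=.
by apply/allP => y /(allP Ha); rewrite inE => /andP[].
Qed.

Lemma hp_desc x : x \in S -> x != v -> (forall y, y \in D x -> deg e S y <= 2) ->
  hp e (D x) x.
Proof.
move: {2}#|D x| (leqnn #|D x|) => n; elim: n x => [|n IH] x Hn xS xv Hdeg.
  by move: Hn; rewrite leqn0 cards_eq0 => /eqP H; move: (D_self xS); rewrite H inE.
have Hch : #|children e S v x| <= 1.
  have := children_deg xS xv; have := Hdeg x (D_self xS); slia.
case: (posnP #|children e S v x|) => Hc0.
  have -> : D x = [set x].
    apply/setP => y; rewrite in_set1; case: (eqVneq y x) => [->|yx]; first by rewrite D_self.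
    apply/negP => yD; have [w wc _] := D_split xS yD yx.
    by move: Hc0 => /eqP; rewrite cards_eq0 => /eqP H; rewrite H inE in wc.
  exact: hp1.
have /cards1P[c Hc] : #|children e S v x| == 1 by rewrite eqn_leq Hch Hc0.
have cc : c \in children e S v x by rewrite Hc inE.
have [cS exc Hdc] := child_prop cc.
have xDc : x \notin D c by apply/negP => /(D_d cS)[H _]; slia.
have HD : D x = x |: D c.
  apply/setP => y; rewrite in_setU1; case: (eqVneq y x) => [->|yx] /=; first by rewrite D_self.
  apply/idP/idP => [yD|yD].
    by have [w] := D_split xS yD yx; rewrite Hc inE => /eqP ->.
  exact: (subsetP (D_child_sub xS cc)).
have cv : c != v by apply/eqP => cv; move: Hdc; rewrite cv d_v.
rewrite HD; apply: hpS; [|exact: xDc|exact: exc|].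
- apply: IH => //.
  + move: Hn; rewrite HD cardsU1 xDc; slia.
  + by move=> y yD; apply: Hdeg; rewrite HD inE yD orbT.
- move=> y yD exy.
  by have [] := D_child_boundary xS cc yD xS xDc (ltac:(by rewrite esym)).
Qed.


Lemma inSep (A : {set T}) (P : pred T) y : (y \in [set z in A | P z]) = (y \in A) && P y.
Proof. by rewrite in_set. Qed.

Lemma in_childmod u i w : (w \in childmod e S v u i) =
  (w \in children e S v u) && (#|D w| %% 3 == i).
Proof. by rewrite /childmod in_set. Qed.

Lemma u_notin_Dchild u w : u \in S -> w \in children e S v u -> u \notin D w.
Proof.
move=> uS wc; have [wS _ Hw] := child_prop wc.
by apply/negP => /(D_d wS)[H _]; rewrite Hw ltnn in H.
Qed.

Lemma case1 u : u \in S -> (forall w, w \in children e S v u -> hp e (D w) w) ->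
  (0 < #|childmod e S v u 2|) || (1 < #|childmod e S v u 1|) ->
  exists F0, max_dissociation e (D u) F0 /\ u \notin F0.
Proof.
move=> uS Hhp Hc.
have [F mF] := max_ex e (D u).
have dF := mF.1.
case: (boolP (u \in F)) => uF; last by exists F.
have FDu := diss_subS dF.
have DuS := D_sub u.
have Hj : exists2 j, j \in children e S v u & #|F :&: D j| < diss e (D j).
  case/orP: Hc => [/card_gt0P[j]|/card_gt1P[j1 [j2 [j1c j2c j12]]]].
    rewrite in_childmod => /andP[jc /eqP Hr]; exists j => //.
    have [_ _ H3 H4] := hp_main esym eirr (Hhp j jc).
    have [jS euj _] := child_prop jc.
    have dG : dissociation e (D j) (F :&: D j).
      by apply: (diss_sub dF); [exact: subsetIl|exact: subsetIr].
    case: (boolP (j \in F)) => jF.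
      apply: (H4 Hr _ dG); first by rewrite inE jF D_self.
      move=> y; rewrite inE => /andP[yF yD]; apply/negP => ejy.
      have uy : u != y by apply/eqP => uy; move: (u_notin_Dchild uS jc); rewrite uy yD.
      by apply: (two_nb dF jF uF yF uy); rewrite // esym.
    by apply: (H3 _ _ dG); rewrite ?Hr // inE negb_and jF.
  move: j1c j2c; rewrite !in_childmod => /andP[j1c /eqP Hr1] /andP[j2c /eqP Hr2].
  have : (j1 \notin F) || (j2 \notin F).
    rewrite -negb_and; apply/negP => /andP[j1F j2F].
    have [_ e1 _] := child_prop j1c; have [_ e2 _] := child_prop j2c.
    exact: (two_nb dF uF j1F j2F j12 e1 e2).
  case/orP => [jF|jF]; [exists j1 => //|exists j2 => //].
    have [_ _ H3 _] := hp_main esym eirr (Hhp j1 j1c).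
    apply: H3; rewrite ?Hr1 // ?inE ?negb_and ?jF //.
    by apply: (diss_sub dF); [exact: subsetIl|exact: subsetIr].
  have [_ _ H3 _] := hp_main esym eirr (Hhp j2 j2c).
  apply: H3; rewrite ?Hr2 // ?inE ?negb_and ?jF //.
  by apply: (diss_sub dF); [exact: subsetIl|exact: subsetIr].
case: Hj => j jc Hlt.
have [jS euj Hdj] := child_prop jc.
have uDj := u_notin_Dchild uS jc.
have DjDu := D_child_sub uS jc.
have [Gj mGj] := max_ex e (D j).
have dGj := mGj.1; have GjD := diss_subS dGj.
set R := F :\: (u |: D j).
exists (R :|: Gj); split; last first.
  rewrite !inE negb_or eqxx /=; apply/negP => /(subsetP GjD); by rewrite (negbTE uDj).
have RF : R \subset F by exact: subsetDl.
have Rb : forall y, y \in R -> y \notin D j /\ y != u.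
  by move=> y; rewrite !inE negb_or => /andP[/andP[? ?] _].
apply: maxdP.
  rewrite /dissociation subUset (subset_trans RF FDu) (subset_trans GjD DjDu) /=.
  apply/forall_inP => x; rewrite in_setU => /orP[xR|xG].
    apply: leq_trans (diss_nb dF (subsetP RF x xR)); apply: subset_leq_card.
    apply/subsetP => y; rewrite !inSep in_setU => /andP[/orP[yR|yG] exy].
      by rewrite exy (subsetP RF y yR).
    have [xD xu] := Rb x xR.
    have xS : x \in S by apply: (subsetP DuS); apply: (subsetP FDu); apply: (subsetP RF).
    have [_ xu'] := D_child_boundary uS jc (subsetP GjD y yG) xS xD (ltac:(by rewrite esym)).
    by rewrite xu' eqxx in xu.
  apply: leq_trans (diss_nb dGj xG); apply: subset_leq_card.
  apply/subsetP => y; rewrite !inSep in_setU => /andP[/orP[yR|yG] exy]; last by rewrite yG exy.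
  have [yD yu] := Rb y yR.
  have yS : y \in S by apply: (subsetP DuS); apply: (subsetP FDu); apply: (subsetP RF).
  have [_ yu'] := D_child_boundary uS jc (subsetP GjD x xG) yS yD exy.
  by rewrite yu' eqxx in yu.
rewrite -(maxd_card mF).
have HRG : #|R :|: Gj| = #|R| + #|Gj|.
  rewrite -cardsUI; suff -> : R :&: Gj = set0 by rewrite cards0 addn0.
  apply/setP => y; rewrite in_setI in_set0; apply/negP => /andP[/(Rb y)[yD _] /(subsetP GjD)].
  by rewrite (negbTE yD).
have HF := cardsID (u |: D j) F.
have HI : F :&: (u |: D j) = u |: (F :&: D j).
  by apply/setP => y; rewrite !inE; case: eqP => // ->; rewrite uF.
rewrite HI cardsU1 inE (negbTE uDj) andbF /= in HF.
rewrite HRG (maxd_card mGj) -HF -/R.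
move: Hlt; slia.
Qed.

Lemma step S' : prune_step e v S S' -> preserve e S S' v /\ is_tree e S' /\ v \in S'.
Proof.
case=> u [uS uv Hdeg Hmax Hif].
have Hhp : forall w, w \in children e S v u -> hp e (D w) w.
  move=> w wc; have [wS euw Hw] := child_prop wc.
  have wv : w != v by apply/eqP => wv; move: Hw; rewrite wv d_v.
  apply: hp_desc => // y yD; rewrite leqNgt; apply/negP => Hy.
  have yS := subsetP (D_sub w) y yD.
  have [H1 _] := D_d wS yD.
  have yv : y != v by apply/eqP => yv; move: H1; rewrite yv d_v Hw.
  have := Hmax y yS yv Hy; move: H1 Hw; slia.
move: Hif; case: ifP => Hc.
  move=> ->.
  have vD := v_notin_D uS uv.
  split; last split.
  - apply: (remove1 esym (D_sub u)) => //.
    have [F0 [mF0 uF0]] := case1 uS Hhp Hc.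
    exists F0; split => // a y aF0; rewrite in_setD => /andP[yD yS]; apply/negP => eay.
    have aD := subsetP (diss_subS mF0.1) a aF0.
    have [au _] := D_boundary uS aD yS yD eay.
    by rewrite -au aF0 in uF0.
  - apply: tree_remove => // x p xS xv pS epx Hp pD.
    case: (eqVneq x u) => [->|xu]; first exact: D_self.
    by rewrite (D_par uS xS xu pS epx Hp).
  - by rewrite in_setD vD vS.
case=> z [zc Hz ->].
set W := children e S v u :\ z.
have HW : \bigcup_(w in children e S v u | w != z) D w = \bigcup_(w in W) D w.
  by apply: eq_bigl => w; rewrite /W in_setD1 andbC.
rewrite HW.
have Wc : forall w, w \in W -> w \in children e S v u.
  by move=> w; rewrite in_setD1 => /andP[].
have vDw : forall w, w \in W -> v \notin D w.
  move=> w /Wc wc; have [wS _ Hw] := child_prop wc; apply: v_notin_D => //.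
  by apply/eqP => wv; move: Hw; rewrite wv d_v.
have vB : v \notin \bigcup_(w in W) D w.
  by apply/bigcupP => -[w wW]; apply/negP; exact: vDw.
split; last split.
- apply: (remove_many esym).
  + by move=> w _; exact: D_sub.
  + move=> w1 w2 /Wc c1 /Wc c2 w12; rewrite -setI_eq0; apply/eqP/setP => x.
    rewrite in_setI in_set0; apply/negP => /andP[x1 x2].
    by move: (D_disj uS c1 c2 w12 x1); rewrite x2.
  + move=> w wW; have wc := Wc w wW; have [wS _ _] := child_prop wc.
    have wz : w != z by move: wW; rewrite in_setD1 => /andP[].
    move: Hc => /negbT; rewrite negb_or -!leqNgt leqn0 cards_eq0 => /andP[/eqP H2 H1].
    have Hr : #|D w| %% 3 = 0.
      have N2 : w \notin childmod e S v u 2 by rewrite H2 inE.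
      have N1 : w \notin childmod e S v u 1.
        apply/negP => w1.
        have Hz1 : #|childmod e S v u 1| == 1.
          by rewrite eqn_leq H1 /=; apply/card_gt0P; exists w.
        have z1 := Hz Hz1.
        have : 1 < #|childmod e S v u 1| by apply/card_gt1P; exists w, z.
        by case: ltngtP H1.
      move: N1 N2; rewrite !in_childmod wc /= => /eqP N1 /eqP N2.
      have := ltn_pmod #|D w| (isT : 0 < 3); move: N1 N2; clear; intros; lia.
    have [_ H0 _ _] := hp_main esym eirr (Hhp w wc).
    have [G [mG wG]] := H0 Hr.
    exists G; split => // a y aG; rewrite in_setD => /andP[yD yS]; apply/negP => eay.
    have aD := subsetP (diss_subS mG.1) a aG.
    have [aw _] := D_child_boundary uS wc aD yS yD eay.
    by rewrite -aw aG in wG.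
  + exact: vDw.
- apply: tree_remove => // x p xS xv pS epx Hp /bigcupP[w wW pD].
  apply/bigcupP; exists w => //.
  have [wS _ _] := child_prop (Wc w wW).
  case: (eqVneq x w) => [->|xw]; first exact: D_self.
  by rewrite (D_par wS xS xw pS epx Hp).
- by rewrite in_setD vS andbT.
Qed.

End Tree.

Lemma main_ind (T : finType) (e : rel T) (v : T) (S Sb : {set T}) :
  symmetric e -> irreflexive e ->
  pruning e v S Sb -> is_tree e S -> v \in S -> preserve e S Sb v.
Proof.
move=> esym eirr; elim => [S0 _ | S0 S1 Sb0 Hs _ IH] tS vS0; first by split; split.
have [P1 [t1 v1]] := step esym eirr tS vS0 Hs.
exact: preserve_trans P1 (IH t1 v1).
Qed.

Theorem corollary3p1 (T : finType) (e : rel T) (V Vbar : {set T}) (v : T) :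
  symmetric e -> irreflexive e ->
  is_tree e V -> v \in V ->
  pruning e v V Vbar ->
  (in_A e V v <-> in_A e Vbar v) /\ (in_N e V v <-> in_N e Vbar v).
Proof. move=> es ei tV vV P; exact: (main_ind es ei P tV vV). Qed.
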